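(* Let $m,n$ be positive integers and let $r_1,\dots,r_k$ and $s_1,\dots,s_k$ be positive integers with $\sum_{i=1}^k r_i=m$ and $\sum_{i=1}^k s_i=n$. Put $a_0=0$ and $a_p=\sum_{i=1}^p(nr_i-ms_i)$ for $p\in[k-1]$. Let $\Lambda=(a'_1,\dots,a'_n|b'_1,\dots,b'_m)\in\mathbb Z^{n|m}$ where $(b'_1,\dots,b'_m)$ is the concatenation, for $i=1,\dots,k$, of the blocks $(a_{i-1},a_{i-1}+n,a_{i-1}+2n,\dots,a_{i-1}+(r_i-1)n)$, and $(a'_1,\dots,a'_n)$ is the concatenation, for $i=1,\dots,k-1$, of the blocks $(a_i+(s_i-1)m,\dots,a_i+m,a_i)$, followed by the block $((s_k-1)m,\dots,m,0)$. Then $\Lambda$ lies in the orbit of $\Lambda_0=(m(n-1),\dots,m,0\,|\,0,n,\dots,n(m-1))$ under the Weyl groupoid action on $\mathbb Z^{n|m}$.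
   Context: Elements of $\mathbb Z^{n|m}$ are written $\Lambda=(a_1,\dots,a_n|b_1,\dots,b_m)$, identified with $\sum_ia_i\epsilon_i-\sum_jb_j\delta_j$. The Weyl groupoid action (Sergeev–Veselov action with parameter $-n/m$) is generated by: the group $S_n\times S_m$ permuting $a_1,\dots,a_n$ among themselves and $b_1,\dots,b_m$ among themselves; and, for each $\alpha=\epsilon_i-\delta_j$, the bijection $\tau_\alpha:\Pi_\alpha\to\Pi_{-\alpha}$, $\Lambda\mapsto\Lambda+n\epsilon_i-m\delta_j$ (adding $n$ to $a_i$ and $m$ to $b_j$) and its inverse $\tau_{-\alpha}$, where $\Pi_\alpha=\{a_i=b_j\}$ and $\Pi_{-\alpha}=\{a_i-b_j=n-m\}$. The orbit of $\Lambda_0$ is the set of elements reachable from $\Lambda_0$ by finite sequences of such permutations and maps $\tau_{\pm\alpha}$ (each applied on its domain). *)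

(* Defs.v *)
From HB Require Import structures.
From mathcomp Require Import all_boot all_order all_algebra all_fingroup.
From Stdlib Require Import Relations.
Set Implicit Arguments. Unset Strict Implicit. Unset Printing Implicit Defensive.
Import Order.TTheory GRing.Theory Num.Theory.
Local Open Scope ring_scope.

Definition elt (n m : nat) : Type := ({ffun 'I_n -> int} * {ffun 'I_m -> int})%type.

(* One generating move of the Weyl groupoid action (parameter -n/m). *)
Inductive wstep (n m : nat) : elt n m -> elt n m -> Prop :=
| wstep_perm (s : {perm 'I_n}) (t : {perm 'I_m}) (L : elt n m) :
    wstep L ([ffun i => L.1 (s i)], [ffun j => L.2 (t j)])
| wstep_tau (i : 'I_n) (j : 'I_m) (L : elt n m) :
    L.1 i = L.2 j ->
    wstep L ([ffun i' => if i' == i then L.1 i' + n%:Z else L.1 i'],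
             [ffun j' => if j' == j then L.2 j' + m%:Z else L.2 j'])
| wstep_tauinv (i : 'I_n) (j : 'I_m) (L : elt n m) :
    L.1 i - L.2 j = n%:Z - m%:Z ->
    wstep L ([ffun i' => if i' == i then L.1 i' - n%:Z else L.1 i'],
             [ffun j' => if j' == j then L.2 j' - m%:Z else L.2 j']).

Definition weyl_orbit (n m : nat) (L0 L : elt n m) : Prop :=
  clos_refl_trans (elt n m) (@wstep n m) L0 L.

Definition Lambda0 (n m : nat) : elt n m :=
  ([ffun i : 'I_n => (m * (n.-1 - i))%N%:Z], [ffun j : 'I_m => (n * j)%N%:Z]).

(* a_p = sum_{i=1}^p (n r_i - m s_i), with r, s 0-indexed sequences. *)
Definition apref (n m : nat) (r s : seq nat) (p : nat) : int :=
  \sum_(i < p) ((n * nth 0 r i)%N%:Z - (m * nth 0 s i)%N%:Z).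

Definition bseq (n m : nat) (r s : seq nat) : seq int :=
  flatten [seq [seq apref n m r s i + (l * n)%N%:Z | l <- iota 0 (nth 0 r i)]
          | i <- iota 0 (size r)].

(* a' : blocks (a_i+(s_i-1)m, ..., a_i+m, a_i) for i = 1..k-1, then
   ((s_k-1)m, ..., m, 0).  Index i (1-based) is i'.+1 with i' 0-based. *)
Definition aseq (n m : nat) (r s : seq nat) : seq int :=
  flatten [seq [seq (if (i'.+1 < size s)%N then apref n m r s i'.+1 else 0)
                    + ((nth 0 s i' - 1 - l) * m)%N%:Z
               | l <- iota 0 (nth 0 s i')]
          | i' <- iota 0 (size s)].

Definition LambdaRS (n m : nat) (r s : seq nat) : elt n m :=
  ([ffun i : 'I_n => nth 0 (aseq n m r s) i],
   [ffun j : 'I_m => nth 0 (bseq n m r s) j]).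

(* Main.v *)
Require Import Defs.
From mathcomp Require Import all_boot all_order all_algebra all_fingroup.
From mathcomp Require Import zify ring.
From Stdlib Require Import Relations.
Set Implicit Arguments. Unset Strict Implicit. Unset Printing Implicit Defensive.
Import Order.TTheory GRing.Theory Num.Theory.
Local Open Scope ring_scope.

Fixpoint av (n m : nat) (h : int) (w : seq bool) : seq int :=
  if w is b :: w' then
    (if b then av n m (h + n%:Z) w' else (h - m%:Z) :: av n m (h - m%:Z) w')
  else [::].
Fixpoint bv (n m : nat) (h : int) (w : seq bool) : seq int :=
  if w is b :: w' then
    (if b then h :: bv n m (h + n%:Z) w' else bv n m (h - m%:Z) w')
  else [::].
Fixpoint ht (n m : nat) (h : int) (w : seq bool) : int :=
  if w is b :: w' then ht n m (if b then h + n%:Z else h - m%:Z) w' else h.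

Lemma av_cat n m h u v : av n m h (u ++ v) = av n m h u ++ av n m (ht n m h u) v.
Proof. by elim: u h => [|[] u IH] h //=; rewrite IH. Qed.
Lemma bv_cat n m h u v : bv n m h (u ++ v) = bv n m h u ++ bv n m (ht n m h u) v.
Proof. by elim: u h => [|[] u IH] h //=; rewrite IH. Qed.
Lemma ht_cat n m h u v : ht n m h (u ++ v) = ht n m (ht n m h u) v.
Proof. by elim: u h => [|[] u IH] h //=. Qed.
Lemma size_av n m h w : size (av n m h w) = count negb w.
Proof. by elim: w h => [|[] w IH] h //=; rewrite IH. Qed.
Lemma size_bv n m h w : size (bv n m h w) = count id w.
Proof. by elim: w h => [|[] w IH] h //=; rewrite IH. Qed.

Definition mk n m (A B : seq int) : elt n m :=
  ([ffun i : 'I_n => nth 0 A i], [ffun j : 'I_m => nth 0 B j]).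

Lemma step_perm n m A A' B B' : size A = n -> size B = m ->
  perm_eq A A' -> perm_eq B B' -> wstep (mk n m A B) (mk n m A' B').
Proof.
move=> sA sB pA pB.
have sAt : size A == n by rewrite sA.
have sBt : size B == m by rewrite sB.
have sAt' : size A' == n by rewrite -(perm_size pA) sA.
have sBt' : size B' == m by rewrite -(perm_size pB) sB.
pose tA := Tuple sAt; pose tB := Tuple sBt.
pose tA' := Tuple sAt'; pose tB' := Tuple sBt'.
have : perm_eq tA' tA by rewrite /= perm_sym.
case/tuple_permP => p Ep.
have : perm_eq tB' tB by rewrite /= perm_sym.
case/tuple_permP => q Eq.
have -> : mk n m A' B' =
  ([ffun i => (mk n m A B).1 (p i)], [ffun j => (mk n m A B).2 (q j)]).
  rewrite /mk; congr pair; apply/ffunP => i; rewrite !ffunE.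
    have -> : nth 0 A' i = tnth [tuple tnth tA (p i) | i < n] i by rewrite (tnth_nth 0) -Ep.
    by rewrite tnth_mktuple (tnth_nth 0).
  have -> : nth 0 B' i = tnth [tuple tnth tB (q i) | i < m] i by rewrite (tnth_nth 0) -Eq.
  by rewrite tnth_mktuple (tnth_nth 0).
exact: wstep_perm.
Qed.

Lemma step_tauinv n m x A B : (0 < n)%N -> (0 < m)%N ->
  wstep (mk n m (x + n%:Z :: A) (x + m%:Z :: B)) (mk n m (x :: A) (x :: B)).
Proof.
move=> n0 m0.
have -> : mk n m (x :: A) (x :: B) =
  ([ffun i' => if i' == Ordinal n0 then (mk n m (x + n%:Z :: A) (x + m%:Z :: B)).1 i' - n%:Z
               else (mk n m (x + n%:Z :: A) (x + m%:Z :: B)).1 i'],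
   [ffun j' => if j' == Ordinal m0 then (mk n m (x + n%:Z :: A) (x + m%:Z :: B)).2 j' - m%:Z
               else (mk n m (x + n%:Z :: A) (x + m%:Z :: B)).2 j']).
  rewrite /mk; congr pair; apply/ffunP => -[[|i] Hi]; rewrite !ffunE.
  - by rewrite (_ : Ordinal Hi = Ordinal n0) ?eqxx ?addrK //; apply: val_inj.
  - by case: eqP => // /(congr1 val).
  - by rewrite (_ : Ordinal Hi = Ordinal m0) ?eqxx ?addrK //; apply: val_inj.
  - by case: eqP => // /(congr1 val).
apply: wstep_tauinv; rewrite /mk !ffunE /=; ring.
Qed.

Definition wrel (u v : seq bool) :=
  exists p q, u = p ++ [:: true, false & q] /\ v = p ++ [:: false, true & q].

Definition mkw n m w := mk n m (av n m 0 w) (bv n m 0 w).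

Lemma perm_mid (T : eqType) (P Q : seq T) y : perm_eq (P ++ y :: Q) (y :: P ++ Q).
Proof. by rewrite -cat1s perm_catCA. Qed.

Lemma wrel_count u v P : wrel u v -> count P u = count P v.
Proof.
case=> p [q [-> ->]]; rewrite !count_cat /=; lia.
Qed.

Lemma wrel_reach n m u v : wrel u v -> (0 < n)%N -> (0 < m)%N ->
  count negb u = n -> count id u = m -> weyl_orbit (mkw n m u) (mkw n m v).
Proof.
move=> [p [q [Eu Ev]]] n0 m0 cu cm.
have sA : size (av n m 0 u) = n by rewrite size_av.
have sB : size (bv n m 0 u) = m by rewrite size_bv.
move: sA sB; rewrite /mkw Eu Ev !av_cat !bv_cat /=.
set h := ht n m 0 p; set P := av n m 0 p; set Q := bv n m 0 p.
have -> : h - m%:Z + n%:Z = h + n%:Z - m%:Z by ring.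
set A := av _ _ _ q; set B := bv _ _ _ q.
move=> sA sB.
have E1 : h + n%:Z - m%:Z = (h - m%:Z) + n%:Z by ring.
have E2 : h = (h - m%:Z) + m%:Z by ring.
apply: rt_trans; first apply: rt_step.
  apply: (step_perm (A' := h + n%:Z - m%:Z :: P ++ A) (B' := h :: Q ++ B)) => //;
  exact: perm_mid.
rewrite {1}E1 {2}E2.
apply: rt_trans; first apply: rt_step; first exact: step_tauinv.
apply: rt_step; apply: step_perm.
- by move: sA; rewrite !size_cat /= size_cat; lia.
- by move: sB; rewrite !size_cat /= size_cat; lia.
- by rewrite perm_sym perm_mid.
- by rewrite perm_sym perm_mid.
Qed.

Lemma wrel_cons b u v : clos_refl_trans _ wrel u v ->
  clos_refl_trans _ wrel (b :: u) (b :: v).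
Proof.
elim=> [x y [p [q [-> ->]]]| x | x y z _ IH1 _ IH2].
- by apply: rt_step; exists (b :: p), q.
- exact: rt_refl.
- exact: rt_trans IH1 IH2.
Qed.

Lemma bubble c u : clos_refl_trans _ wrel (nseq c true ++ false :: u)
  (false :: nseq c true ++ u).
Proof.
elim: c => [|c IH] /=; first exact: rt_refl.
apply: rt_trans; first exact: wrel_cons IH.
by apply: rt_step; exists [::], (nseq c true ++ u).
Qed.

Lemma sort_reach w : clos_refl_trans _ wrel
  (nseq (count id w) true ++ nseq (count negb w) false) w.
Proof.
elim: w => [|[] w IH]; first exact: rt_refl.
- have -> : count id (true :: w) = (count id w).+1 by [].
  have -> : count negb (true :: w) = count negb w by [].
  exact: wrel_cons.
- have -> : count id (false :: w) = count id w by [].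
  have -> : count negb (false :: w) = (count negb w).+1 by [].
  rewrite /=.
  apply: rt_trans; first exact: bubble.
  exact: wrel_cons.
Qed.

Lemma rt_count u v P : clos_refl_trans _ wrel u v -> count P u = count P v.
Proof.
elim=> [x y H| x | x y z _ IH1 _ IH2]; [exact: wrel_count | by [] | congruence].
Qed.

Lemma rt_reach n m u v : clos_refl_trans _ wrel u v -> (0 < n)%N -> (0 < m)%N ->
  count negb u = n -> count id u = m -> weyl_orbit (mkw n m u) (mkw n m v).
Proof.
move=> H n0 m0; elim: H => [x y H| x | x y z H1 IH1 H2 IH2] cn cm.
- exact: wrel_reach.
- exact: rt_refl.
- apply: rt_trans (IH1 cn cm) (IH2 _ _); by rewrite -(rt_count _ H1).
Qed.

Lemma av_T n m h c : av n m h (nseq c true) = [::].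
Proof. by elim: c h => //= c IH h. Qed.
Lemma bv_F n m h c : bv n m h (nseq c false) = [::].
Proof. by elim: c h => //= c IH h. Qed.
Lemma ht_T n m h c : ht n m h (nseq c true) = h + (c * n)%N%:Z.
Proof.
elim: c h => [|c IH] h /=; first by rewrite addr0.
rewrite IH; lia.
Qed.
Lemma ht_F n m h c : ht n m h (nseq c false) = h - (c * m)%N%:Z.
Proof.
elim: c h => [|c IH] h /=; first by rewrite subr0.
rewrite IH; lia.
Qed.
Lemma bv_T n m h c : bv n m h (nseq c true) = [seq h + (l * n)%N%:Z | l <- iota 0 c].
Proof.
elim: c h => [|c IH] h //=; rewrite IH addr0 -[in RHS](addn0 1%N) iotaDl -map_comp.
congr (_ :: _); apply: eq_map => l /=; lia.
Qed.
Lemma av_F n m h c : av n m h (nseq c false) = [seq h - (l.+1 * m)%N%:Z | l <- iota 0 c].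
Proof.
elim: c h => [|c IH] h //=; rewrite IH mul1n -[in RHS](addn0 1%N) iotaDl -map_comp.
congr (_ :: _); apply: eq_map => l /=; lia.
Qed.

Lemma Lambda0E n m : Lambda0 n m = mkw n m (nseq m true ++ nseq n false).
Proof.
rewrite /Lambda0 /mkw /mk av_cat bv_cat av_T bv_F ht_T av_F bv_T cats0 /=.
congr pair; apply/ffunP => i; rewrite !ffunE.
  rewrite (nth_map 0%N) ?size_iota // nth_iota //.
  have := ltn_ord i; move: (nat_of_ord i) => j Hj; nia.
rewrite (nth_map 0%N) ?size_iota // nth_iota //; lia.
Qed.

Definition blk (r s : seq nat) i := nseq (nth 0%N r i) true ++ nseq (nth 0%N s i) false.
Definition Wp (r s : seq nat) p := flatten [seq blk r s i | i <- iota 0 p].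
Definition ablk n m (r s : seq nat) i' :=
  [seq apref n m r s i'.+1 + ((nth 0%N s i' - 1 - l) * m)%N%:Z | l <- iota 0 (nth 0%N s i')].
Definition bblk n m (r s : seq nat) i :=
  [seq apref n m r s i + (l * n)%N%:Z | l <- iota 0 (nth 0%N r i)].

Lemma aprefS n m r s p : apref n m r s p.+1 =
  apref n m r s p + (n * nth 0%N r p)%N%:Z - (m * nth 0%N s p)%N%:Z.
Proof. by rewrite /apref big_ord_recr /= addrA. Qed.

Lemma Wp_spec n m r s p :
  [/\ ht n m 0 (Wp r s p) = apref n m r s p,
      av n m 0 (Wp r s p) = flatten [seq ablk n m r s i | i <- iota 0 p] &
      bv n m 0 (Wp r s p) = flatten [seq bblk n m r s i | i <- iota 0 p]].
Proof.
elim: p => [|p [IH1 IH2 IH3]].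
  by rewrite /Wp /apref big_ord0.
rewrite /Wp -addn1 iotaD !map_cat !flatten_cat /= !cats0 -/(Wp r s p).
rewrite ?add0n /blk; set R := nth 0%N r p; set S := nth 0%N s p.
split.
- by rewrite !ht_cat IH1 ht_T ht_F addn1 aprefS; lia.
- rewrite av_cat IH2 IH1 av_cat av_T ht_T av_F /ablk ?addn1 ?add0n aprefS.
  congr (_ ++ _); rewrite cat0s -/R -/S; apply/eq_in_map => l; rewrite mem_iota add0n => /andP [_ Hl].
  rewrite (mulnC R); move: Hl; nia.
- rewrite bv_cat IH3 IH1 bv_cat bv_T bv_F cats0 /bblk ?addn1.
  by rewrite ?add0n ?cat0s.
Qed.

Lemma apref_full n m r s : size r = size s ->
  apref n m r s (size r) = (n * sumn r)%N%:Z - (m * sumn s)%N%:Z.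
Proof.
elim: r s => [|x r IH] [|y s] //=; first by rewrite /apref big_ord0 !muln0.
move=> [/IH E]; rewrite /apref big_ord_recl /=.
rewrite /apref in E; rewrite E; nia.
Qed.


Theorem proposition6p2 (m n k : nat) (r s : seq nat) :
  (0 < m)%N -> (0 < n)%N ->
  size r = k -> size s = k ->
  all (fun x => (0 < x)%N) r -> all (fun x => (0 < x)%N) s ->
  sumn r = m -> sumn s = n ->
  weyl_orbit (Lambda0 n m) (LambdaRS n m r s).
Proof.
move=> m0 n0 Hr Hs _ _ Sr Ss.
have cT : count id (Wp r s k) = m.
  rewrite /Wp count_flatten -map_comp.
  rewrite (eq_map (g := nth 0%N r)); last first.
    by move=> i /=; rewrite /blk count_cat !count_nseq /= mul1n mul0n addn0.
  by rewrite -Hr -[map _ (iota 0 _)]/(mkseq _ _) mkseq_nth.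
have cF : count negb (Wp r s k) = n.
  rewrite /Wp count_flatten -map_comp.
  rewrite (eq_map (g := nth 0%N s)); last first.
    by move=> i /=; rewrite /blk count_cat !count_nseq /= mul1n mul0n.
  by rewrite -Hs -[map _ (iota 0 _)]/(mkseq _ _) mkseq_nth.
have ak : apref n m r s k = 0.
  rewrite -Hr apref_full ?Hr ?Hs // Sr Ss mulnC subrr //.
have -> : LambdaRS n m r s = mkw n m (Wp r s k).
  have [_ EA EB] := Wp_spec n m r s k.
  rewrite /LambdaRS /mkw /mk EA EB /aseq /Defs.bseq Hr Hs.
  congr pair; apply/ffunP => j; rewrite !ffunE; congr nth.
  congr flatten; apply/eq_in_map => i; rewrite mem_iota add0n => /andP [_ Hi].
  rewrite /ablk; case: ltnP => // H.
  have -> : i.+1 = k by apply/eqP; rewrite eqn_leq Hi H.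
  by rewrite ak.
rewrite Lambda0E.
have := sort_reach (Wp r s k); rewrite cT cF => H.
apply: rt_reach H _ _ _ _ => //; rewrite count_cat !count_nseq /=; lia.
Qed.
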